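(* Let $M=(\mathbb N_0\times\mathbb N_0)\cup(\mathbb Z\times\mathbb N_{\ge2})\subseteq\mathbb Z^2$ and let $R=\mathbb R[x,y;M]$ be the monoid algebra of $M$ over $\mathbb R$ (monomials $x^ay^b$ with $(a,b)\in M$). Then $R$ is an IDF domain and is almost atomic, but $R$ is not atomic (in particular $R$ is not an FFD).
   Context: For an integral domain $R$: an irreducible is a nonzero nonunit $a$ with $a=uv$ forcing $u$ or $v$ a unit; an element is atomic if it is a unit or a finite product of irreducibles; $R$ is atomic if every nonzero element is atomic; $R$ is almost atomic if for every nonzero $b\in R$ there is an atomic element $a$ such that $ab$ is atomic; $R$ is an IDF domain if every nonzero element is divisible by only finitely many irreducibles up to associates; $R$ is an FFD if it is atomic and each nonzero element has finitely many factorizations up to order and associates. *)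

(* Defs.v *)
(* R[x,y;M] is modelled as a subring of the fraction field
   of R[x][y] (with R = Stdlib's reals, a realType via Rstruct). *)
From HB Require Import structures.
From mathcomp Require Import all_boot all_order all_algebra fraction.
From mathcomp Require Import Rstruct.
Set Implicit Arguments. Unset Strict Implicit. Unset Printing Implicit Defensive.
Import Order.TTheory GRing.Theory Num.Theory.
Local Open Scope ring_scope.

Section SubringNotions.
Variables (F : fieldType) (S : F -> Prop).

Definition unitS (u : F) : Prop := S u /\ u != 0 /\ S u^-1.

Definition irredS (a : F) : Prop :=
  [/\ S a, a != 0, ~ unitS a &
      forall u v, S u -> S v -> a = u * v -> unitS u \/ unitS v].

Definition atomicS (a : F) : Prop :=
  unitS a \/
  exists l : seq F, [/\ l != [::], (forall z, z \in l -> irredS z) &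
                        a = \prod_(z <- l) z].

Definition dvdS (a b : F) : Prop := exists c, S c /\ b = a * c.

Definition assocS (a b : F) : Prop := exists u, unitS u /\ a = u * b.

Definition atomic_dom : Prop := forall a, S a -> a != 0 -> atomicS a.

Definition almost_atomic_dom : Prop :=
  forall b, S b -> b != 0 -> exists a, atomicS a /\ atomicS (a * b).

Definition IDF_dom : Prop :=
  forall b, S b -> b != 0 ->
    exists l : seq F, forall a, irredS a -> dvdS a b ->
      exists2 c, c \in l & assocS a c.
End SubringNotions.

(* Polynomials p : {poly {poly R}}: outer variable = x, inner variable = y;
   (p`_i)`_j is the coefficient of x^i y^j. *)
Definition RXY := {poly {poly Rdefinitions.R}}.
Definition QXY := {fraction RXY}.

Definition xF : QXY := FracField.tofrac ('X : RXY).

Definition inM (a : int) (b : nat) : bool := (0 <= a) || (2 <= b)%N.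

Definition monoidAlg (f : QXY) : Prop :=
  exists (n : nat) (p : RXY),
    f = FracField.tofrac p / xF ^+ n /\
    forall i j : nat, (p`_i)`_j != 0 -> inM (i%:Z - n%:Z) j.

(* Main.v *)
Require Import Defs.
From HB Require Import structures.
From mathcomp Require Import all_boot all_order all_algebra fraction.
From mathcomp Require Import Rstruct.
From Stdlib Require Import ClassicalEpsilon Classical.
From mathcomp Require Import zify ring lra.
Set Implicit Arguments. Unset Strict Implicit. Unset Printing Implicit Defensive.
Import Order.TTheory GRing.Theory Num.Theory.
Local Open Scope ring_scope.

Opaque FracField.inv FracField.mul FracField.add FracField.opp FracField.tofrac.
Notation RR := Rdefinitions.R.
Fact SS_key : unit. Proof. by []. Qed.
Definition SS := locked_with SS_key monoidAlg.
Lemma SSE : SS = monoidAlg. Proof. by rewrite /SS unlock. Qed.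
Lemma SSP f : SS f <-> monoidAlg f. Proof. by rewrite SSE. Qed.
Notation S := SS.
Notation KK := {fraction {poly RR}}.
Fact xK_key : unit. Proof. by []. Qed.
Definition xK : KK := locked_with xK_key (FracField.tofrac ('X : {poly RR})).
Lemma xKE : xK = FracField.tofrac ('X : {poly RR}).
Proof. by rewrite /xK unlock. Qed.
Notation tf := (@FracField.tofrac _).

Lemma xF_neq0 : xF != 0.
Proof. by rewrite /xF tofrac_eq0 polyX_eq0. Qed.
Lemma xK_neq0 : xK != 0.
Proof. by rewrite xKE tofrac_eq0 polyX_eq0. Qed.

Definition Phi_def (p : RXY) : {poly KK} := map_poly tf (swapXY p).
Fact Phi_key : unit. Proof. by []. Qed.
Definition Phi := locked_with Phi_key Phi_def.
Lemma PhiE p : Phi p = map_poly tf (swapXY p).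
Proof. by rewrite /Phi unlock. Qed.

Lemma PhiM p q : Phi (p * q) = Phi p * Phi q.
Proof. by rewrite !PhiE !rmorphM. Qed.
Lemma PhiD p q : Phi (p + q) = Phi p + Phi q.
Proof. by rewrite !PhiE !rmorphD. Qed.
Lemma Phi1 : Phi 1 = 1.
Proof. by rewrite !PhiE !rmorph1. Qed.
Lemma coef_Phi p j : (Phi p)`_j = tf ((swapXY p)`_j).
Proof. by rewrite !PhiE coef_map. Qed.
Lemma Phi_inj : injective Phi.
Proof.
move=> p q /polyP E; apply: (can_inj swapXYK); apply/polyP => j.
by have := E j; rewrite !coef_Phi => /eqP; rewrite tofrac_eq => /eqP.
Qed.
Lemma PhiX : Phi 'X = (xK)%:P.
Proof. by rewrite !PhiE swapXY_X map_polyC xKE. Qed.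
Lemma PhiXn n : Phi ('X^n) = (xK ^+ n)%:P.
Proof. by rewrite !PhiE rmorphXn /= swapXY_X rmorphXn /= map_polyC rmorphXn xKE. Qed.
Lemma PhiC (c : RR) : Phi (c%:P%:P) = (tf c%:P)%:P.
Proof. by rewrite !PhiE swapXY_polyC map_polyC /= map_polyC. Qed.
Lemma Phiy : Phi (('X : {poly RR})%:P) = 'X.
Proof. by rewrite !PhiE swapXY_polyC map_polyX map_polyX. Qed.

Lemma xFn_neq0 n : xF ^+ n != 0.
Proof. by rewrite expf_neq0 // xF_neq0. Qed.
Lemma xKn_neq0 n : xK ^+ n != 0.
Proof. by rewrite expf_neq0 // xK_neq0. Qed.

Lemma tfXn n : tf ('X ^+ n : RXY) = xF ^+ n.
Proof. by rewrite rmorphXn. Qed.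

Lemma frac_eq (p p' : RXY) n n' :
  tf p / xF ^+ n = tf p' / xF ^+ n' -> p * 'X^n' = p' * 'X^n.
Proof.
move=> /eqP; rewrite eqr_div ?xFn_neq0 // -!tfXn -!rmorphM /=.
by rewrite tofrac_eq => /eqP.
Qed.

Definition PP (f : QXY) : {poly KK} :=
  let np := epsilon (inhabits (0%N, (0 : RXY)))
              (fun np => f = tf np.2 / xF ^+ np.1) in
  xK ^- np.1 *: Phi np.2.

Lemma P_rep f n p : f = tf p / xF ^+ n -> PP f = xK ^- n *: Phi p.
Proof.
move=> Hf; rewrite /PP.
set np := epsilon _ _.
have : f = tf np.2 / xF ^+ np.1.
  by apply: (epsilon_spec (inhabits (0%N, (0:RXY))) (fun np => f = tf np.2 / xF ^+ np.1)); exists (n, p).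
case: np => n' p' /= Hf'.
have E := frac_eq (etrans (esym Hf') Hf).
have E2 : xK ^+ n *: Phi p' = xK ^+ n' *: Phi p.
  have := congr1 Phi E; rewrite !PhiM !PhiXn.
  rewrite (mulrC (Phi p')) (mulrC (Phi p)).
  by rewrite [in X in X = _ -> _]mul_polyC [in X in _ = X -> _]mul_polyC.
have nz : xK ^+ n * xK ^+ n' != 0 by rewrite mulf_neq0 ?xKn_neq0.
apply: (can_inj (scalerK nz)); rewrite !scalerA.
rewrite -mulrA mulfV ?xKn_neq0 // mulr1 E2 [xK ^+ n * _]mulrC -mulrA mulfV ?xKn_neq0 //.
by rewrite mulr1.
Qed.

Lemma sum_neq0_ex (V : nmodType) N (F : 'I_N -> V) :
  \sum_(i < N) F i != 0 -> exists i : 'I_N, F i != 0.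
Proof.
move=> H; apply: NNPP => H'; move: H; rewrite big1 ?eqxx // => i _.
by case: (eqVneq (F i) 0) => // Hi; case: H'; exists i.
Qed.

Lemma inM_add (a b : int) (c d : nat) : inM a c -> inM b d -> inM (a + b) (c + d).
Proof. rewrite /inM => /orP[H1|H1] /orP[H2|H2]; apply/orP; lia. Qed.

Lemma S_mul f g : S f -> S g -> S (f * g).
Proof.
move=> /SSP [n [p [-> Hp]]] /SSP [m [q [-> Hq]]].
apply/SSP; exists (n + m)%N, (p * q); split.
  by rewrite rmorphM exprD invfM mulrACA.
move=> i j; rewrite coefM coef_sum => /sum_neq0_ex [k].
rewrite coefM => /sum_neq0_ex [l]; rewrite mulf_eq0 negb_or => /andP[H1 H2].
have := inM_add (Hp _ _ H1) (Hq _ _ H2).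
have hk := ltn_ord k; have hl := ltn_ord l.
rewrite subnKC; last by rewrite -ltnS.
by rewrite /inM; lia.
Qed.

Lemma S_C (c : RR) : S (tf (c%:P%:P)).
Proof.
apply/SSP; exists 0%N, (c%:P%:P); split; first by rewrite expr0 invr1 mulr1.
move=> i j; rewrite coefC; case: (i =P 0%N) => [->|]; last by rewrite coef0 eqxx.
by rewrite /inM.
Qed.

Lemma S_1 : S 1.
Proof. by have := S_C 1; rewrite !rmorph1. Qed.

Lemma S_0 : S 0.
Proof. by have := S_C 0; rewrite !rmorph0. Qed.

Lemma S_xF : S xF.
Proof.
apply/SSP; exists 0%N, 'X; split; first by rewrite expr0 invr1 mulr1.
move=> i j; rewrite coefX; case: (i =P 1%N) => [->|]; first by rewrite /inM.
by rewrite coef0 eqxx.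
Qed.

Definition yF : QXY := tf (('X : {poly RR})%:P).

Lemma S_y : S yF.
Proof.
apply/SSP; exists 0%N, (('X : {poly RR})%:P); split; first by rewrite expr0 invr1 mulr1.
move=> i j; rewrite coefC; case: (i =P 0%N) => [->|]; last by rewrite coef0 eqxx.
by rewrite /inM.
Qed.

Lemma S_expr f k : S f -> S (f ^+ k).
Proof. by move=> Hf; elim: k => [|k IH]; [rewrite expr0; exact: S_1 | rewrite exprS; exact: S_mul]. Qed.

Lemma S_prod (l : seq QXY) : (forall z, z \in l -> S z) -> S (\prod_(z <- l) z).
Proof.
elim: l => [|a l IH] H; first by rewrite big_nil; exact: S_1.
rewrite big_cons; apply: S_mul; first by apply: H; rewrite mem_head.
apply: IH => z zl; apply: H.
by rewrite in_cons zl orbT.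
Qed.

Lemma rep0 (p : RXY) : tf p = tf p / xF ^+ 0.
Proof. by rewrite expr0 invr1 mulr1. Qed.

Lemma P_mul f g : S f -> S g -> PP (f * g) = PP f * PP g.
Proof.
move=> /SSP [n [p [Ef _]]] /SSP [m [q [Eg _]]].
rewrite (P_rep Ef) (P_rep Eg) (@P_rep _ (n + m)%N (p * q)); last first.
  by rewrite Ef Eg rmorphM exprD invfM mulrACA.
by rewrite -scalerAl -scalerAr scalerA PhiM exprD invfM.
Qed.

Lemma P_inj f g : S f -> S g -> PP f = PP g -> f = g.
Proof.
move=> /SSP [n [p [Ef _]]] /SSP [m [q [Eg _]]].
rewrite (P_rep Ef) (P_rep Eg) Ef Eg => E.
have E2 : Phi (p * 'X^m) = Phi (q * 'X^n).
  rewrite !PhiM !PhiXn.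
  have E' := congr1 (fun P => (xK ^+ n * xK ^+ m) *: P) E; move: E' => /=.
  rewrite !scalerA.
  have -> : xK ^+ n * xK ^+ m * xK ^- n = xK ^+ m.
    by rewrite mulrAC mulfV ?xKn_neq0 ?mul1r.
  have -> : xK ^+ n * xK ^+ m * xK ^- m = xK ^+ n.
    by rewrite -mulrA mulfV ?xKn_neq0 ?mulr1.
  rewrite (mulrC (Phi p)) (mulrC (Phi q)).
  by move=> H; rewrite [in LHS]mul_polyC [in RHS]mul_polyC.
apply/eqP; rewrite eqr_div ?xFn_neq0 // -!tfXn -!rmorphM /= tofrac_eq.
by rewrite (Phi_inj E2).
Qed.

Lemma P_C (c : RR) : PP (tf c%:P%:P) = (tf c%:P)%:P.
Proof. by rewrite (P_rep (rep0 _)) expr0 invr1 scale1r PhiC. Qed.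

Lemma P_1 : PP 1 = 1.
Proof. by have := P_C 1; rewrite !rmorph1. Qed.

Lemma P_0 : PP 0 = 0.
Proof. by have := P_C 0; rewrite !rmorph0. Qed.

Lemma P_xFn k : PP (xF ^+ k) = (xK ^+ k)%:P.
Proof. by rewrite -tfXn (P_rep (rep0 _)) expr0 invr1 scale1r PhiXn. Qed.

Lemma P_y : PP yF = 'X.
Proof. by rewrite (P_rep (rep0 _)) expr0 invr1 scale1r Phiy. Qed.

Lemma P_neq0 f : S f -> f != 0 -> PP f != 0.
Proof.
move=> Sf; apply: contra => /eqP H; apply/eqP; apply: P_inj => //; first exact: S_0.
by rewrite H P_0.
Qed.

Lemma Xn_factor (R : nzRingType) (q : {poly R}) n :
  (forall i, (i < n)%N -> q`_i = 0) -> q = 'X^n * \poly_(i < size q) q`_(i + n).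
Proof.
move=> H; apply/polyP => i; rewrite coefXnM.
case: ltnP => [/H //|le_ni]; rewrite coef_poly subnK //.
case: ltnP => // Hs; rewrite nth_default //.
by apply: leq_trans Hs _; rewrite leq_subr.
Qed.

Lemma coefA f j : S f -> (j <= 1)%N -> exists a : {poly RR}, (PP f)`_j = tf a.
Proof.
move=> /SSP [n [p [Ef Hp]]] Hj; rewrite (P_rep Ef) coefZ coef_Phi.
set q := (swapXY p)`_j.
have Hq : forall i, (i < n)%N -> q`_i = 0.
  move=> i Hi; rewrite /q coef_swapXY; apply/eqP; apply: contraT => /Hp.
  by rewrite /inM; lia.
rewrite (Xn_factor Hq); eexists; rewrite rmorphM rmorphXn /= -xKE.
by rewrite mulrA mulVf ?xKn_neq0 ?mul1r.
Qed.

Definition E0 (f : QXY) : {poly RR} :=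
  epsilon (inhabits 0) (fun a => tf a = (PP f)`_0).

Lemma E0P f : S f -> tf (E0 f) = (PP f)`_0.
Proof.
move=> Sf; rewrite /E0; apply: (epsilon_spec (inhabits 0) (fun a => tf a = (PP f)`_0)).
by have [a Ha] := coefA Sf (leq0n 1); exists a.
Qed.

Lemma E0M f g : S f -> S g -> E0 (f * g) = E0 f * E0 g.
Proof.
move=> Sf Sg; apply/eqP; rewrite -tofrac_eq rmorphM /=.
by rewrite (E0P (S_mul Sf Sg)) (E0P Sf) (E0P Sg) (P_mul Sf Sg) coef0M.
Qed.

Lemma E0_C (c : RR) : E0 (tf c%:P%:P) = c%:P.
Proof. by apply/eqP; rewrite -tofrac_eq (E0P (S_C c)) P_C coefC. Qed.

Lemma E0_xFn k : E0 (xF ^+ k) = 'X^k.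
Proof.
by apply/eqP; rewrite -tofrac_eq (E0P (S_expr k S_xF)) P_xFn coefC /= rmorphXn xKE.
Qed.

Lemma E0_1 : E0 1 = 1.
Proof. by have := E0_C 1; rewrite !rmorph1. Qed.

Lemma unit_sizes u : unitS S u -> size (PP u) = 1%N /\ size (E0 u) = 1%N.
Proof.
move=> [Su [nz Sv]].
have H1 : PP u * PP u^-1 = 1 by rewrite -P_mul // mulfV // P_1.
have H2 : E0 u * E0 u^-1 = 1 by rewrite -E0M // mulfV // E0_1.
have := congr1 (fun q : {poly KK} => size q) H1; rewrite size_poly1 => /eqP; rewrite size_mul_eq1 => /andP[/eqP -> _].
by have := congr1 (fun q : {poly RR} => size q) H2; rewrite size_poly1 => /eqP; rewrite size_mul_eq1 => /andP[/eqP -> _].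
Qed.

Lemma unitM a b : unitS S a -> unitS S b -> unitS S (a * b).
Proof.
move=> [Sa [na Sa']] [Sb [nb Sb']]; split; first exact (S_mul Sa Sb).
split; first exact (mulf_neq0 na nb).
by rewrite invfM; exact (S_mul Sa' Sb').
Qed.

Lemma unitV a : unitS S a -> unitS S a^-1.
Proof. move=> [Sa [na Sa']]; split; first exact Sa'.
split; first by rewrite invr_neq0.
by rewrite invrK. Qed.

Lemma const_unit (c : RR) : c != 0 -> unitS S (tf c%:P%:P).
Proof.
move=> nc; split; first exact: S_C.
have nz : tf (c%:P%:P : RXY) != 0 by rewrite tofrac_eq0 !polyC_eq0.
split; first exact nz.
have h : tf (c%:P%:P : RXY) * tf ((c^-1)%:P%:P) = 1.
  by rewrite -rmorphM -polyCM -polyCM (mulfV nc) !polyC1 rmorph1.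
have -> : (tf (c%:P%:P : RXY))^-1 = tf (c^-1)%:P%:P.
  by rewrite -[RHS]mul1r -(mulVf nz) -mulrA h mulr1.
exact: S_C.
Qed.

Lemma size1_const (R : nzRingType) (p : {poly R}) : size p = 1%N -> p = (p`_0)%:P /\ p`_0 != 0.
Proof.
move=> Hs; split; first by apply: size1_polyC; rewrite Hs.
have : lead_coef p != 0 by rewrite lead_coef_eq0 -size_poly_gt0 Hs.
by rewrite lead_coefE Hs.
Qed.

Lemma unit_of_sizes f : S f -> size (PP f) = 1%N -> size (E0 f) = 1%N -> unitS S f.
Proof.
move=> Sf /size1_const [HP _] /size1_const [HE nz].
suff -> : f = tf ((E0 f)`_0)%:P%:P by exact: const_unit.
apply: (P_inj Sf (S_C _)).
rewrite HP P_C -(E0P Sf).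
exact: (congr1 (fun q => (tf q)%:P) HE).
Qed.

Lemma nonunit_xFn k : (0 < k)%N -> ~ unitS S (xF ^+ k).
Proof. by move=> Hk /unit_sizes [_]; rewrite E0_xFn size_polyXn; case: k Hk. Qed.

Lemma S_tf (p : RXY) : S (tf p).
Proof.
apply/SSP; exists 0%N, p; split; first exact: rep0.
by move=> i j _; rewrite /inM subr0.
Qed.

Lemma unit1 : unitS S 1.
Proof. split; first exact S_1. split; first exact: oner_neq0. rewrite invr1; exact S_1. Qed.

Lemma irr_unitM c z : unitS S c -> irredS S z -> irredS S (c * z).
Proof.
move=> Uc [Sz nz nuz Hz]; have [Sc [nc Sc']] := Uc.
split.
- exact (S_mul Sc Sz).
- exact (mulf_neq0 nc nz).
- move=> U; apply: nuz; have -> : z = c^-1 * (c * z) by rewrite mulKf.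
  exact (unitM (unitV Uc) U).
- move=> u v Su Sv E.
  have E' : z = (c^-1 * u) * v by rewrite -mulrA -E mulKf.
  case: (Hz _ _ (S_mul Sc' Su) Sv E') => [Hu|Hv]; [left|right; exact Hv].
  have -> : u = c * (c^-1 * u) by rewrite mulVKf.
  exact (unitM Uc Hu).
Qed.

Lemma atomic_unit u : unitS S u -> atomicS S u.
Proof. by move=> H; left. Qed.

Lemma atomic_irr z : irredS S z -> atomicS S z.
Proof.
move=> H; right; exists [:: z]; split; first by [].
  by move=> w; rewrite mem_seq1 => /eqP ->.
by rewrite big_seq1.
Qed.

Lemma atomic_unit_mul c b : unitS S c -> atomicS S b -> atomicS S (c * b).
Proof.
move=> Uc [Ub|[l [nl Hl Eb]]]; first by left; exact (unitM Uc Ub).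
case: l nl Hl Eb => [//|z0 l] _ Hl Eb.
right; exists (c * z0 :: l); split; first by [].
  move=> w; rewrite in_cons => /orP[/eqP ->|wl].
    by apply: irr_unitM Uc _; apply: Hl; rewrite mem_head.
  by apply: Hl; rewrite in_cons wl orbT.
by rewrite Eb !big_cons mulrA.
Qed.

Lemma atomic_mul a b : atomicS S a -> atomicS S b -> atomicS S (a * b).
Proof.
move=> [Ua|Ha] Hb; first exact: (atomic_unit_mul Ua Hb).
case: Hb => [Ub|[lb [nlb Hlb Eb]]]; first by rewrite mulrC; exact: (atomic_unit_mul Ub (or_intror Ha)).
case: Ha => [la [nla Hla Ea]].
right; exists (la ++ lb); split.
- by case: la nla {Hla Ea}.
- by move=> w; rewrite mem_cat => /orP[/Hla|/Hlb].
- by rewrite big_cat Ea Eb.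
Qed.

Lemma atomic_expr a k : atomicS S a -> atomicS S (a ^+ k).
Proof.
move=> Ha; elim: k => [|k IH]; first by rewrite expr0; left; exact unit1.
by rewrite exprS; apply: atomic_mul.
Qed.

Lemma irr_xF : irredS S xF.
Proof.
split.
- exact S_xF.
- exact xF_neq0.
- by have := @nonunit_xFn 1 isT; rewrite expr1.
move=> u v Su Sv E.
have HP : PP u * PP v = (xK)%:P by rewrite -(P_mul Su Sv) -E -[xF]expr1 P_xFn expr1.
have HE : E0 u * E0 v = 'X by rewrite -(E0M Su Sv) -E -[xF]expr1 E0_xFn expr1.
have := congr1 (fun q : {poly KK} => size q) HP; rewrite size_polyC xK_neq0 /=.
move=> /eqP; rewrite size_mul_eq1 => /andP[/eqP sPu /eqP sPv].
have nEu : E0 u != 0 by apply: contraTneq isT => Eu; move: HE; rewrite Eu mul0r => /eqP; rewrite eq_sym polyX_eq0.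
have nEv : E0 v != 0 by apply: contraTneq isT => Ev; move: HE; rewrite Ev mulr0 => /eqP; rewrite eq_sym polyX_eq0.
have hs : ((size (E0 u) + size (E0 v)).-1 = 2)%N by rewrite -size_mul // HE size_polyX.
rewrite -subn1 in hs; have h1 : (0 < size (E0 u))%N by rewrite size_poly_gt0.
have h2 : (0 < size (E0 v))%N by rewrite size_poly_gt0.
case: (leqP (size (E0 u)) 1) => hu.
  by left; apply: unit_of_sizes => //; lia.
by right; apply: unit_of_sizes => //; lia.
Qed.

Lemma yF_neq0 : yF != 0.
Proof. by rewrite /yF tofrac_eq0 polyC_eq0 polyX_eq0. Qed.

Lemma irr_y_aux u v : S u -> S v -> size (PP u) = 1%N -> PP u * PP v = 'X -> unitS S u.
Proof.
move=> Su Sv Hs E; have [Hu _] := size1_const Hs.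
have [a Ha] := coefA (j := 1) Sv (leqnn 1).
have H1 : (PP u)`_0 * (PP v)`_1 = 1.
  by rewrite -coefCM -Hu E coefX eqxx.
rewrite -(E0P Su) Ha -rmorphM in H1.
move/eqP: H1; rewrite -tofrac1 tofrac_eq => /eqP H.
have := congr1 (fun q : {poly RR} => size q) H; rewrite size_poly1 => /eqP.
rewrite size_mul_eq1 => /andP[/eqP h1 _].
exact: (unit_of_sizes Su Hs h1).
Qed.

Lemma irr_y : irredS S yF.
Proof.
split.
- exact S_y.
- exact yF_neq0.
- by move/unit_sizes => [+ _]; rewrite P_y size_polyX.
move=> u v Su Sv E.
have HP : PP u * PP v = 'X by rewrite -(P_mul Su Sv) -E P_y.
have nPu : PP u != 0 by apply: contraTneq isT => Eu; move: HP; rewrite Eu mul0r => /eqP; rewrite eq_sym polyX_eq0.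
have nPv : PP v != 0 by apply: contraTneq isT => Ev; move: HP; rewrite Ev mulr0 => /eqP; rewrite eq_sym polyX_eq0.
have hs : ((size (PP u) + size (PP v)).-1 = 2)%N by rewrite -size_mul // HP size_polyX.
rewrite -subn1 in hs; have h1 : (0 < size (PP u))%N by rewrite size_poly_gt0.
have h2 : (0 < size (PP v))%N by rewrite size_poly_gt0.
case: (leqP (size (PP u)) 1) => hu.
  by left; apply: (irr_y_aux Su Sv) => //; lia.
right; apply: (irr_y_aux Sv Su); first lia.
by rewrite mulrC.
Qed.

Lemma atomic0 N f : S f -> (PP f)`_0 != 0 ->
  (size (PP f) + size (E0 f) <= N)%N -> atomicS S f.
Proof.
elim: N f => [|N IH] f Sf H0 Hs.
  have nzP : PP f != 0 by apply: contraNneq H0 => ->; rewrite coef0 eqxx.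
  have : (0 < size (PP f))%N by rewrite size_poly_gt0.
  by lia.
have nzf : f != 0 by apply: contraNneq H0 => ->; rewrite P_0 coef0 eqxx.
case: (classic (unitS S f)) => [Uf|nUf]; first exact: atomic_unit.
case: (classic (irredS S f)) => [If|nIf]; first exact: atomic_irr.
have [u [v [Su Sv Ef nu nv]]] : exists u v, [/\ S u, S v, f = u * v, ~ unitS S u & ~ unitS S v].
  apply: NNPP => Hn; apply: nIf; split; [exact Sf | exact nzf | exact nUf |].
  move=> u v Su Sv Ef.
  case: (classic (unitS S u)) => [?|nu]; first by left.
  case: (classic (unitS S v)) => [?|nv]; first by right.
  by exfalso; apply: Hn; exists u, v; split.
have HP : PP f = PP u * PP v by rewrite Ef (P_mul Su Sv).
have HE : E0 f = E0 u * E0 v by rewrite Ef (E0M Su Sv).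
move: H0; rewrite HP coef0M mulf_eq0 negb_or => /andP[hu hv].
have nPu : PP u != 0 by apply: contraNneq hu => ->; rewrite coef0 eqxx.
have nPv : PP v != 0 by apply: contraNneq hv => ->; rewrite coef0 eqxx.
have nEu : E0 u != 0.
  apply: contraNneq hu => Eu; rewrite -(E0P Su) Eu rmorph0 eqxx; by [].
have nEv : E0 v != 0.
  apply: contraNneq hv => Ev; rewrite -(E0P Sv) Ev rmorph0 eqxx; by [].
have sP : size (PP f) = ((size (PP u) + size (PP v)).-1)%N by rewrite HP size_mul.
have sE : size (E0 f) = ((size (E0 u) + size (E0 v)).-1)%N by rewrite HE size_mul.
have a1 : (0 < size (PP u))%N by rewrite size_poly_gt0.
have a2 : (0 < size (PP v))%N by rewrite size_poly_gt0.
have a3 : (0 < size (E0 u))%N by rewrite size_poly_gt0.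
have a4 : (0 < size (E0 v))%N by rewrite size_poly_gt0.
have b1 : ~ (size (PP u) = 1%N /\ size (E0 u) = 1%N).
  by move=> [h1 h2]; apply: nu; exact: (unit_of_sizes Su h1 h2).
have b2 : ~ (size (PP v) = 1%N /\ size (E0 v) = 1%N).
  by move=> [h1 h2]; apply: nv; exact: (unit_of_sizes Sv h1 h2).
rewrite -!subn1 in sP sE.
rewrite Ef; apply: atomic_mul.
  by apply: (IH u Su hu); lia.
by apply: (IH v Sv hv); lia.
Qed.

Lemma almost_atomic_S : almost_atomic_dom S.
Proof.
move=> b Sb nb; have Sb' := Sb; move/SSP: Sb' => [n [p [Eb Hp]]].
exists (xF ^+ n); split; first exact: (atomic_expr n (atomic_irr irr_xF)).
have -> : xF ^+ n * b = tf p by rewrite Eb mulrC (divfK (xFn_neq0 n)).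
have np : p != 0 by apply: contraNneq nb => Ep; rewrite Eb Ep rmorph0 mul0r.
have [m [r Hr Eq]] := multiplicity_XsubC (swapXY p) 0.
have nq : swapXY p != 0 by rewrite swapXY_eq0.
move: Hr; rewrite nq /= => Hr.
have Ep : p = swapXY r * ('X%:P) ^+ m.
  by rewrite -{1}(swapXYK p) Eq rmorphM rmorphXn /= polyC0 subr0 swapXY_X.
rewrite Ep rmorphM rmorphXn /= -/yF.
apply: atomic_mul; last exact: (atomic_expr m (atomic_irr irr_y)).
apply: (@atomic0 (size (PP (tf (swapXY r))) + size (E0 (tf (swapXY r))))); [exact: S_tf| |exact: leqnn].
rewrite (P_rep (rep0 _)) expr0 invr1 scale1r coef_Phi swapXYK.
by rewrite tofrac_eq0 -horner_coef0.
Qed.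

Definition y2 : RXY := (('X : {poly RR}) ^+ 2)%:P.
Definition b0 : QXY := tf y2 / xF.

Lemma b0_rep : b0 = tf y2 / xF ^+ 1.
Proof. by rewrite expr1. Qed.

Lemma S_b0 : S b0.
Proof.
apply/SSP; exists 1%N, y2; split; first exact: b0_rep.
move=> i j; rewrite /y2 coefC; case: (i =P 0%N) => [->|]; last by rewrite coef0 eqxx.
rewrite coefXn; case: (j =P 2%N) => [->|]; first by rewrite /inM.
by rewrite mulr0n eqxx.
Qed.

Lemma y2_neq0 : y2 != 0.
Proof. by rewrite /y2 polyC_eq0 expf_neq0 // polyX_eq0. Qed.

Lemma b0_neq0 : b0 != 0.
Proof. by rewrite /b0; apply: mulf_neq0; [rewrite tofrac_eq0; exact y2_neq0 | exact (invr_neq0 xF_neq0)]. Qed.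

Lemma P_b0 : PP b0 = xK^-1 *: 'X^2.
Proof.
by rewrite (P_rep b0_rep) expr1 PhiE /y2 swapXY_polyC map_polyXn map_polyXn.
Qed.

Lemma key_na z w : irredS S z -> S w -> b0 = z * w -> exists q, z = tf q.
Proof.
move=> Iz Sw Eb; have [Sz nz nuz Hz] := Iz.
have Sz' := Sz; move/SSP: Sz' => [n [p [Ez Hp]]].
have Hdv : PP z %| ('X - 0%:P) ^+ 2.
  have : PP z %| PP b0 by rewrite Eb (P_mul Sz Sw) dvdp_mulIl.
  by rewrite P_b0 (dvdpZr _ _ (invr_neq0 xK_neq0)) polyC0 subr0.
have [k hk] := dvdp_exp_XsubCP Hdv.
rewrite polyC0 subr0 => /eqpP [[c1 c2] /andP [/= nc1 nc2] Ec].
have Hvan : forall i j, j != k -> (p`_i)`_j = 0.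
  move=> i j njk.
  have : c1 * (PP z)`_j = 0.
    by rewrite -coefZ Ec coefZ coefXn (negPf njk) mulr0.
  move/eqP; rewrite mulf_eq0 (negPf nc1) /= (P_rep Ez) coefZ coef_Phi.
  rewrite mulf_eq0 invr_eq0 (negPf (xKn_neq0 n)) /= tofrac_eq0 => /eqP H.
  by rewrite -coef_swapXY H coef0.
have sPz : size (PP z) = k.+1.
  have := congr1 (fun q : {poly KK} => size q) Ec; rewrite /= (size_scale _ nc1) (size_scale _ nc2).
  by rewrite size_polyXn.
case: (leqP k 1) => hk1.
  have Hq : forall i, (i < n)%N -> p`_i = 0.
    move=> i hi; apply/polyP => j; rewrite coef0.
    case: (j =P k) => [->|/eqP njk]; last exact: Hvan.
    apply/eqP; apply: contraT => /Hp; rewrite /inM; lia.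
  exists (\poly_(i < size p) p`_(i + n)).
  by rewrite Ez {1}(Xn_factor Hq) rmorphM /= tfXn mulrC (mulKf (xFn_neq0 n)).
have k2 : k = 2%N by lia.
exfalso.
have Sd : S (z / xF).
  apply/SSP; exists n.+1, p; split.
    by rewrite Ez exprSr invfM mulrA.
  move=> i j hij.
  have hj : j = k by apply: contraTeq hij => njk; rewrite (Hvan i j njk) eqxx.
  by rewrite /inM hj k2; apply/orP; right.
have Ezd : z = xF * (z / xF) by rewrite mulrC (divfK xF_neq0).
case: (Hz _ _ S_xF Sd Ezd) => [Ux|Ud].
  by have := @nonunit_xFn 1 isT; rewrite expr1.
have [s1 _] := unit_sizes Ud.
have : PP z = (xK)%:P * PP (z / xF).
  by rewrite {1}Ezd (P_mul S_xF Sd) -[xF]expr1 P_xFn expr1.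
move=> /(congr1 (fun q : {poly KK} => size q)) /=.
by rewrite (size_Cmul _ xK_neq0) s1 sPz k2.
Qed.

Lemma prod_tf (l : seq QXY) : (forall z, z \in l -> exists q, z = tf q) ->
  exists q, \prod_(z <- l) z = tf q.
Proof.
elim: l => [|a l IH] H; first by exists 1; rewrite big_nil rmorph1.
have [qa ->] := H a (mem_head a l).
have [q Eq] : exists q, \prod_(z <- l) z = tf q.
  by apply: IH => z zl; apply: H; rewrite in_cons zl orbT.
by exists (qa * q); rewrite big_cons Eq rmorphM.
Qed.

Lemma not_atomic_S : ~ atomic_dom S.
Proof.
move=> H; case: (H b0 S_b0 b0_neq0) => [Ub|[l [nl Hl El]]].
  have [s1 _] := unit_sizes Ub.
  move: s1; rewrite P_b0 (size_scale _ (invr_neq0 xK_neq0)) size_polyXn.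
  by [].
have Hpoly : forall z, z \in l -> exists q, z = tf q.
  move=> z zl; apply: (@key_na z (\prod_(w <- rem z l) w)).
  - exact: Hl.
  - apply: S_prod => w /mem_rem wl; have [Sw _ _ _] := Hl w wl; exact Sw.
  - by rewrite El (big_rem _ zl).
have [Q EQ] := prod_tf Hpoly.
move: El; rewrite EQ /b0 => E.
have E2 : tf (Q * 'X) = tf y2.
  by rewrite rmorphM /= -/xF -E (divfK xF_neq0).
move/eqP: E2; rewrite tofrac_eq => /eqP /(congr1 (fun q : RXY => q`_0)).
rewrite coefMX eqxx /y2 coefC eqxx => /eqP.
by rewrite eq_sym expf_eq0 polyX_eq0.
Qed.

Section FinDiv.
Variable F : fieldType.
Implicit Types p q d : {poly F}.

Lemma exists_irr_div p : (1 < size p)%N -> exists q, irreducible_poly q /\ q %| p.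
Proof.
have [n] := ubnP (size p); elim: n p => // n IH p Hs Hp.
case: (classic (irreducible_poly p)) => [Ip|nIp]; first by exists p; split=> //; exact: dvdpp.
have [q [sq qp nqp]] : exists q, [/\ size q != 1%N, q %| p & ~~ (q %= p)].
  apply: NNPP => H; apply: nIp; split=> // q sq qp; apply: NNPP => nqp.
  by apply: H; exists q; split=> //; apply/negP.
have pn0 : p != 0 by rewrite -size_poly_gt0; lia.
have qn0 : q != 0 by apply: contraNneq pn0 => q0; move: qp; rewrite q0 dvd0p.
have sq2 : (1 < size q)%N.
  by move: sq; rewrite -size_poly_gt0 in qn0; lia.
have sqp : (size q < size p)%N.
  have := dvdp_leq pn0 qp; rewrite leq_eqVlt => /orP[|//].
  by rewrite (dvdp_size_eqp qp) (negPf nqp).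
have [r [Ir rq]] := IH q (leq_trans sqp Hs) sq2.
by exists r; split=> //; exact: dvdp_trans rq qp.
Qed.

Lemma fin_div p : p != 0 ->
  exists l : seq {poly F}, forall d, d %| p -> exists2 d0, d0 \in l & d %= d0.
Proof.
have [n] := ubnP (size p); elim: n p => // n IH p Hs Hp.
case: (leqP (size p) 1) => hp.
  exists [:: 1] => d dp; exists 1; first by rewrite mem_seq1.
  have dn0 : d != 0 by apply: contraNneq Hp => d0; move: dp; rewrite d0 dvd0p.
  have h1 := dvdp_leq Hp dp.
  have h2 : (0 < size d)%N by rewrite size_poly_gt0.
  have h3 : (0 < size p)%N by rewrite size_poly_gt0.
  by rewrite -size_poly_eq1 eqn_leq h2 andbT (leq_trans h1 hp).
have [q [Iq qp]] := exists_irr_div hp.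
set r := p %/ q.
have Er : r * q = p by rewrite /r divpK.
have qn0 : q != 0 by apply: irredp_neq0.
have rn0 : r != 0 by apply: contraNneq Hp => r0; rewrite -Er r0 mul0r.
have sq2 : (1 < size q)%N := Iq.1.
have srp : (size r < size p)%N.
  have hr : (0 < size r)%N by rewrite size_poly_gt0.
  rewrite -Er size_mul //; move: hr sq2; set a := size r; set b := size q; lia.
have [l Hl] := IH r (leq_trans srp Hs) rn0.
exists (l ++ map (fun d0 => q * d0) l) => d dp.
case: (boolP (coprimep d q)) => cop.
  have : d %| r by rewrite -(Gauss_dvdpl _ cop) Er.
  by move=> /Hl [d0 d0l Ed]; exists d0; rewrite // mem_cat d0l.
have gq : gcdp d q %= q.
  apply: (Iq.2); last exact: dvdp_gcdr.
  by move: cop; rewrite coprimep_def.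
have qd : q %| d by rewrite -(eqp_dvdl _ gq) dvdp_gcdl.
set d' := d %/ q.
have Ed : d' * q = d by rewrite /d' divpK.
have : d' %| r by rewrite -(dvdp_mul2r _ _ qn0) Ed Er.
move=> /Hl [d0 d0l Ed0]; exists (q * d0).
  by rewrite mem_cat; apply/orP; right; apply: map_f.
by rewrite -Ed mulrC eqp_mul2l.
Qed.
End FinDiv.

Lemma texp_id (F : fieldType) (t : F) e j1 n1 j2 n2 : t != 0 ->
  (e + j1 + n2 = j2 + n1)%N -> t ^+ e * (t ^+ j1 / t ^+ n1) = t ^+ j2 / t ^+ n2.
Proof.
move=> nt H; apply/eqP; rewrite mulrA eqr_div ?expf_neq0 // -!exprD.
by rewrite (_ : (e + j1 + n2 = j2 + n1)%N) // eqxx.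
Qed.

Lemma scal_id (F : fieldType) (q a t : F) e j1 n1 j2 n2 : t != 0 ->
  (e + j1 + n2 = j2 + n1)%N ->
  (q * t ^+ e) * (a * t ^+ j1 / t ^+ n1) = (q * a) * t ^+ j2 / t ^+ n2.
Proof.
move=> nt H; rewrite -[RHS]mulrA -(texp_id nt H).
ring.
Qed.

Lemma scal_id2 (F : fieldType) (xn M D Xj L : F) :
  (xn^-1 * (M * D * Xj)) / L = (M * Xj / xn) * (D / L).
Proof. ring. Qed.


Definition shape (z : QXY) (G : {poly KK}) :=
  exists (mu : RR) (j n : nat), mu != 0 /\ PP z = (tf mu%:P * xK ^+ j / xK ^+ n) *: G.

Lemma shape_core z1 z2 G mu1 j1 n1 mu2 j2 n2 :
  irredS S z1 -> irredS S z2 -> mu1 != 0 -> mu2 != 0 ->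
  PP z1 = (tf mu1%:P * xK ^+ j1 / xK ^+ n1) *: G ->
  PP z2 = (tf mu2%:P * xK ^+ j2 / xK ^+ n2) *: G ->
  (j1 + n2 <= j2 + n1)%N -> exists u, unitS S u /\ z2 = u * z1.
Proof.
move=> I1 I2 nm1 nm2 E1 E2 hle.
have [S1 _ nu1 _] := I1; have [S2 _ _ H2] := I2.
set e := ((j2 + n1) - (j1 + n2))%N.
have He : (e + j1 + n2 = j2 + n1)%N by rewrite /e; lia.
set u : QXY := tf ((mu2 / mu1)%:P%:P).
have Uu : unitS S u := const_unit (mulf_neq0 nm2 (invr_neq0 nm1)).
have Su : S u := S_C _.
have Se : S (xF ^+ e) := S_expr e S_xF.
have Suz : S (u * z1) := S_mul Su S1.
have Eq : z2 = xF ^+ e * (u * z1).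
  apply: (P_inj S2 (S_mul Se Suz)).
  rewrite (P_mul Se Suz) (P_mul Su S1) P_xFn P_C E1 E2.
  rewrite mulrA -polyCM [in RHS]mul_polyC scalerA.
  congr (_ *: _).
  rewrite [xK ^+ e * _]mulrC (scal_id _ _ xK_neq0 He).
  by rewrite -rmorphM -polyCM (divfK nm1).
case: (posnP e) => [e0|epos].
  by exists u; split=> //; rewrite Eq e0 expr0 mul1r.
exfalso; case: (H2 _ _ Se Suz Eq) => [Ux|Uz].
  exact: (nonunit_xFn epos Ux).
apply: nu1; have -> : z1 = u^-1 * (u * z1) by rewrite mulKf // tofrac_eq0 !polyC_eq0 mulf_neq0 // invr_neq0.
exact: (unitM (unitV Uu) Uz).
Qed.

Lemma shape_assoc z1 z2 G : irredS S z1 -> irredS S z2 -> shape z1 G -> shape z2 G ->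
  assocS S z1 z2.
Proof.
move=> I1 I2 [mu1 [j1 [n1 [nm1 E1]]]] [mu2 [j2 [n2 [nm2 E2]]]].
case: (leqP (j1 + n2) (j2 + n1)) => hle.
  have [u [Uu Ez]] := shape_core I1 I2 nm1 nm2 E1 E2 hle.
  have [_ [nu _]] := Uu.
  exists u^-1; split; first exact: unitV.
  by rewrite Ez (mulKf nu).
have [u [Uu Ez]] := shape_core I2 I1 nm2 nm1 E2 E1 (ltnW hle).
by exists u.
Qed.

Lemma lead_Phi p : lead_coef (Phi p) = tf (lead_coef (swapXY p)).
Proof.
have inj : injective (@FracField.tofrac {poly RR}).
  by move=> x y /eqP; rewrite tofrac_eq => /eqP.
by rewrite PhiE (lead_coef_map_inj inj (rmorph0 _)).
Qed.

Lemma lead_PP f n p : f = tf p / xF ^+ n -> lead_coef (PP f) = xK ^- n * tf (lead_coef (swapXY p)).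
Proof. by move=> Ef; rewrite (P_rep Ef) lead_coefZ lead_Phi. Qed.

Lemma swapXY_Xn N : swapXY ('X ^+ N : RXY) = (('X : {poly RR}) ^+ N)%:P.
Proof. by rewrite rmorphXn /= swapXY_X rmorphXn. Qed.

Lemma lead_swap_mulXn (p : RXY) N : lead_coef (swapXY (p * 'X ^+ N)) = lead_coef (swapXY p) * 'X ^+ N.
Proof. by rewrite rmorphM /= swapXY_Xn lead_coefM lead_coefC. Qed.

Lemma shape_of_div a c b (l1 : seq {poly KK}) (l2 : seq {poly RR}) nb pb :
  irredS S a -> S c -> b = a * c -> b = tf pb / xF ^+ nb ->
  (forall d, d %| PP b -> exists2 d0, d0 \in l1 & d %= d0) ->
  (forall d, d %| lead_coef (swapXY pb) -> exists2 d0, d0 \in l2 & d %= d0) ->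
  exists d m, [/\ d \in l2, m \in l1 & shape a ((tf d / lead_coef m) *: m)].
Proof.
move=> Ia Sc Ebc Eb Hl1 Hl2.
have [Sa na _ _] := Ia.
have Sa' := Sa; move/SSP: Sa' => [n1 [pa [Ea _]]].
have Sc' := Sc; move/SSP: Sc' => [n2 [pc [Ec _]]].
have HP : PP b = PP a * PP c by rewrite Ebc (P_mul Sa Sc).
have dv : PP a %| PP b by rewrite HP dvdp_mulIl.
have [m ml Em] := Hl1 _ dv.
case/eqpP: Em => [[c1 c2] /andP [/= nc1 nc2] Ecm].
have Epa : PP a = (c1^-1 * c2) *: m by rewrite -scalerA -Ecm (scalerK nc1).
have nPa : PP a != 0 := P_neq0 Sa na.
have mn0 : m != 0.
  by apply: contraNneq nPa => m0; rewrite Epa m0 scaler0.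
have lmn0 : lead_coef m != 0 by rewrite lead_coef_eq0.
have Eabc : tf pb / xF ^+ nb = tf (pa * pc) / xF ^+ (n1 + n2).
  by rewrite -Eb Ebc Ea Ec rmorphM exprD invfM mulrACA.
have HR := frac_eq Eabc.
have HL : lead_coef (swapXY pb) * 'X ^+ (n1 + n2) =
          lead_coef (swapXY pa) * lead_coef (swapXY pc) * 'X ^+ nb.
  by rewrite -lead_swap_mulXn HR lead_swap_mulXn rmorphM /= lead_coefM.
have pan0 : pa != 0.
  by apply: contraNneq na => pa0; rewrite Ea pa0 rmorph0 mul0r.
have [jj [la' Hr Ela]] := multiplicity_XsubC (lead_coef (swapXY pa)) 0.
move: Hr; rewrite lead_coef_eq0 swapXY_eq0 pan0 /= => Hr.
rewrite polyC0 subr0 in Ela.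
have dla : la' %| lead_coef (swapXY pb).
  have : la' %| lead_coef (swapXY pb) * 'X ^+ (n1 + n2).
    by rewrite HL Ela -!mulrA dvdp_mulIl.
  by rewrite Gauss_dvdpl // coprimep_expr // coprimepX.
have [d dl Ed] := Hl2 _ dla.
case/eqpP: Ed => [[e1 e2] /andP [/= ne1 ne2] Ee].
have Ela' : la' = (e1^-1 * e2) *: d by rewrite -scalerA -Ee (scalerK ne1).
exists d, m; split=> //.
exists (e1^-1 * e2), jj, n1; split; first by rewrite mulf_neq0 // invr_neq0.
have Hlead : lead_coef (PP a) = (c1^-1 * c2) * lead_coef m by rewrite Epa lead_coefZ.
have Hk : c1^-1 * c2 = lead_coef (PP a) / lead_coef m by rewrite Hlead (mulfK lmn0).
rewrite Epa scalerA; congr (_ *: _).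
rewrite Hk (lead_PP Ea) Ela Ela' -mul_polyC !rmorphM /= rmorphXn /= -xKE.
exact: scal_id2.
Qed.

Lemma IDF_S : IDF_dom S.
Proof.
move=> b Sb nb.
have Sb' := Sb; move/SSP: Sb' => [nb' [pb [Eb _]]].
have nPb : PP b != 0 := P_neq0 Sb nb.
have pbn0 : pb != 0.
  by apply: contraNneq nb => pb0; rewrite Eb pb0 rmorph0 mul0r.
have lBn0 : lead_coef (swapXY pb) != 0 by rewrite lead_coef_eq0 swapXY_eq0.
have [l1 Hl1] := fin_div nPb.
have [l2 Hl2] := fin_div lBn0.
pose Q (d : {poly RR}) (m : {poly KK}) (z : QXY) :=
  irredS S z /\ dvdS S z b /\ shape z ((tf d / lead_coef m) *: m).
pose pk d m := epsilon (inhabits (0 : QXY)) (Q d m).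
exists [seq pk d m | d <- l2, m <- l1].
move=> a Ia [c [Sc Ebc]].
have [d [m [dl ml Sh]]] := shape_of_div Ia Sc Ebc Eb Hl1 Hl2.
have Hpk : Q d m (pk d m).
  by apply: (epsilon_spec (inhabits (0 : QXY)) (Q d m)); exists a; split=> //; split=> //; exists c.
have [Ipk [_ Shk]] := Hpk.
exists (pk d m); first exact: allpairs_f.
exact: (shape_assoc Ia Ipk Sh Shk).
Qed.

Theorem mainTheorem12 :
  IDF_dom monoidAlg /\ almost_atomic_dom monoidAlg /\ ~ atomic_dom monoidAlg.
Proof.
rewrite -SSE; split; first exact: IDF_S.
split; first exact: almost_atomic_S.
exact: not_atomic_S.
Qed.
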